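(* Let $G_1=(V_1,E_1)$ and $G_2=(V_2,E_2)$ be finite simple directed graphs (edges are ordered pairs of distinct vertices, written $ij$ for $(i,j)$). Consider binary vectors $\mathbf{x}=(x_{i,k})_{(i,k)\in V_1\times V_2}$, $\mathbf{y}=(y_{ij,kl})_{(ij,kl)\in E_1\times E_2}$, $\mathbf{u}=(u_i)_{i\in V_1}$, $\mathbf{v}=(v_k)_{k\in V_2}$, $\mathbf{e}=(e_{ij})_{ij\in E_1}$, $\mathbf{f}=(f_{kl})_{kl\in E_2}$, all with entries in $\{0,1\}$. Consider the constraints (C1) $u_i+\sum_{k\in V_2}x_{i,k}=1$ for all $i\in V_1$; (C2) $v_k+\sum_{i\in V_1}x_{i,k}=1$ for all $k\in V_2$; (C3) $e_{ij}+\sum_{kl\in E_2}y_{ij,kl}=1$ for all $ij\in E_1$; (C4) $f_{kl}+\sum_{ij\in E_1}y_{ij,kl}=1$ for all $kl\in E_2$; (C5) $y_{ij,kl}\le x_{i,k}$ for all $(ij,kl)\in E_1\times E_2$; (C6) $y_{ij,kl}\le x_{j,l}$ for all $(ij,kl)\in E_1\times E_2$; (C7) $\sum_{l\in V_2:\,kl\in E_2}y_{ij,kl}\le x_{i,k}$ for all $k\in V_2$ and all $ij\in E_1$; (C8) $\sum_{k\in V_2:\,kl\in E_2}y_{ij,kl}\le x_{j,l}$ for all $l\in V_2$ and all $ij\in E_1$. Let $\Gamma_1$ be the set of binary 6-tuples $(\mathbf{x},\mathbf{y},\mathbf{u},\mathbf{v},\mathbf{e},\mathbf{f})$ satisfying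 (C1)–(C6), and $\Gamma_2$ the set of binary 6-tuples satisfying (C1)–(C4), (C7) and (C8). Then $\Gamma_1=\Gamma_2$.
   Context: The variables encode an edit path: $x_{i,k}=1$ iff vertex $i$ is substituted with $k$, $y_{ij,kl}=1$ iff edge $ij$ is substituted with $kl$, $u_i$/$e_{ij}$ indicate deletion of vertex $i$/edge $ij$ from $G_1$, and $v_k$/$f_{kl}$ indicate insertion of vertex $k$/edge $kl$ of $G_2$. *)

(* Defs.v *)
From mathcomp Require Import all_boot.
Set Implicit Arguments. Unset Strict Implicit. Unset Printing Implicit Defensive.

Definition simple_digraph (V : finType) (r : rel V) : Prop := irreflexive r.

Definition edge (V : finType) (r : rel V) : Type := {p : V * V | r p.1 p.2}.
Definition etail (V : finType) (r : rel V) (a : edge r) : V := (sval a).1.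
Definition ehead (V : finType) (r : rel V) (a : edge r) : V := (sval a).2.

Section Constraints.
Variables (V1 V2 : finType) (r1 : rel V1) (r2 : rel V2).
Local Notation E1 := (edge r1).
Local Notation E2 := (edge r2).
(* binary vectors: entries in {0,1}, represented as bools coerced to nat *)
Variables (x : V1 -> V2 -> bool) (y : E1 -> E2 -> bool)
          (u : V1 -> bool) (v : V2 -> bool) (e : E1 -> bool) (f : E2 -> bool).

Definition C1 := forall i : V1, u i + \sum_(k : V2) x i k = 1.
Definition C2 := forall k : V2, v k + \sum_(i : V1) x i k = 1.
Definition C3 := forall a : E1, e a + \sum_(b : E2) y a b = 1.
Definition C4 := forall b : E2, f b + \sum_(a : E1) y a b = 1.
Definition C5 := forall (a : E1) (b : E2), y a b <= x (etail a) (etail b).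
Definition C6 := forall (a : E1) (b : E2), y a b <= x (ehead a) (ehead b).
Definition C7 := forall (k : V2) (a : E1),
  \sum_(b : E2 | etail b == k) y a b <= x (etail a) k.
Definition C8 := forall (l : V2) (a : E1),
  \sum_(b : E2 | ehead b == l) y a b <= x (ehead a) l.

Definition Gamma1 : Prop := [/\ C1, C2, C3, C4 & C5 /\ C6].
Definition Gamma2 : Prop := [/\ C1, C2, C3, C4 & C7 /\ C8].
End Constraints.

(* Main.v *)
Require Import Defs.
From mathcomp Require Import all_boot.

Lemma sub_sum_le (T : finType) (P : pred T) (F : T -> nat) :
  \sum_(b | P b) F b <= \sum_b F b.
Proof.
rewrite [X in _ <= X](bigID P) /=; exact: leq_addr.
Qed.

Lemma one_le_sum (T : finType) (P : pred T) (F : T -> nat) (b : T) :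
  P b -> F b <= \sum_(c | P c) F c.
Proof.
move=> Pb; rewrite (bigD1 b) //=; exact: leq_addr.
Qed.

Theorem proposition2 (V1 V2 : finType) (r1 : rel V1) (r2 : rel V2)
  (H1 : simple_digraph r1) (H2 : simple_digraph r2)
  (x : V1 -> V2 -> bool) (y : edge r1 -> edge r2 -> bool)
  (u : V1 -> bool) (v : V2 -> bool) (e : edge r1 -> bool) (f : edge r2 -> bool) :
  Gamma1 x y u v e f <-> Gamma2 x y u v e f.
Proof.
split.
- case=> c1 c2 c3 c4 [c5 c6]; split => //; split.
  + move=> k a; case Hx: (x (etail a) k).
    * apply: (leq_trans (@sub_sum_le _ _ (fun b => nat_of_bool (y a b)))).
      by rewrite [X in _ <= X]/= -(c3 a) leq_addl.
    * rewrite leqn0 sum_nat_eq0; apply/forallP => b; apply/implyP => /eqP Hb.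
      by move: (c5 a b); rewrite Hb Hx leqn0.
  + move=> l a; case Hx: (x (ehead a) l).
    * apply: (leq_trans (@sub_sum_le _ _ (fun b => nat_of_bool (y a b)))).
      by rewrite [X in _ <= X]/= -(c3 a) leq_addl.
    * rewrite leqn0 sum_nat_eq0; apply/forallP => b; apply/implyP => /eqP Hb.
      by move: (c6 a b); rewrite Hb Hx leqn0.
- case=> c1 c2 c3 c4 [c7 c8]; split => //; split.
  + move=> a b; apply: leq_trans (c7 (etail b) a).
    exact: (@one_le_sum _ (fun c => etail c == etail b) (fun c => nat_of_bool (y a c))).
  + move=> a b; apply: leq_trans (c8 (ehead b) a).
    exact: (@one_le_sum _ (fun c => ehead c == ehead b) (fun c => nat_of_bool (y a c))).
Qed.
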